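(* Let $1\le k<n$ and let $X$ be a fixed real $n\times k$ matrix of full column rank $k$. Let $\mathbf{F}_2^0$ be the class of all distributions $F$ of $Y=X\beta+e$ in $\mathbb{R}^n$, where $\beta$ ranges over $\mathbb{R}^k$ and the distribution of $e$ ranges over all distributions on $\mathbb{R}^n$ with $Ee=0$ and $Eee'=\sigma^2 I_n$ for some $0<\sigma^2<\infty$. Consider an estimator of the form $$\hat\beta=AY+(Y'H_1Y,\dots,Y'H_kY)'$$ where $A$ is a real $k\times n$ matrix with $AX=I_k$ and $H_1,\dots,H_k$ are real $n\times n$ matrices with $\operatorname{tr}(H_j)=0$ and $X'H_jX=0$ for $j=1,\dots,k$. Suppose $E_F(\|\hat\beta\|^2)<\infty$ for every $F\in\mathbf{F}_2^0$. Then $\hat\beta$ is a linear estimator, i.e., $\hat\beta=BY$ for some (non-random) real $k\times n$ matrix $B$.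
   Context: $E_F$ denotes expectation when $Y$ has distribution $F$; $\|\cdot\|$ is the Euclidean norm. *)

(* Defs.v *)
From HB Require Import structures.
From mathcomp Require Import all_boot all_order all_algebra.
From mathcomp Require Import all_classical all_reals all_analysis.
Set Implicit Arguments. Unset Strict Implicit. Unset Printing Implicit Defensive.
Import Order.TTheory GRing.Theory Num.Theory.
Local Open Scope ring_scope.

Definition sqnorm (R : realType) (m : nat) (v : 'cV[R]_m) : R :=
  \sum_(i < m) (v i ord0) ^+ 2.

Definition qform (R : realType) (n : nat) (H : 'M[R]_n) (y : 'cV[R]_n) : R :=
  (y^T *m H *m y) ord0 ord0.

Definition betahat (R : realType) (n k : nat) (A : 'M[R]_(k, n))
  (H : 'I_k -> 'M[R]_n) (y : 'cV[R]_n) : 'cV[R]_k :=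
  A *m y + \col_(j < k) qform (H j) y.

Definition white_noise (R : realType) (d : measure_display) (T : measurableType d)
  (P : probability T R) (n : nat) (e : T -> 'cV[R]_n) (s2 : R) : Prop :=
  (forall i : 'I_n, measurable_fun setT (fun t => e t i ord0)) /\
  (forall i : 'I_n, P.-integrable setT (fun t => (e t i ord0)%:E)) /\
  (forall i : 'I_n, (\int[P]_t (e t i ord0)%:E = 0)%E) /\
  (forall i j : 'I_n,
      P.-integrable setT (fun t => (e t i ord0 * e t j ord0)%:E) /\
      (\int[P]_t (e t i ord0 * e t j ord0)%:E = (if i == j then s2 else 0)%:E)%E).

(* Main.v *)
Require Import Defs.
From HB Require Import structures.
From mathcomp Require Import all_boot all_order all_algebra.
From mathcomp Require Import all_classical all_reals all_analysis.
From mathcomp Require Import measurable_realfun.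
From mathcomp Require Import ring lra.
Import Order.TTheory GRing.Theory Num.Theory.
Import numFieldNormedType.Exports.
Local Open Scope classical_set_scope.
Local Open Scope ring_scope.

Section regroup.
Local Open Scope ereal_scope.
Lemma regroup (R : realType) (N : nat) (f : nat -> \bar R) : (0 < N)%N ->
  (forall m, 0 <= f m) ->
  \sum_(m <oo) f m = \sum_(l <oo) \sum_(k < N) f (l * N + k)%N.
Proof.
move=> N0 f0.
have E L : \sum_(0 <= m < (L * N)%N) f m = \sum_(0 <= l < L) \sum_(k < N) f (l * N + k)%N.
  rewrite big_nat_mul; apply: eq_bigr => l _.
  rewrite -{1}(add0n (l * N)%N) big_addn mulSn addnK big_mkord.
  by apply: eq_bigr => k _; rewrite addnC.
apply/eqP; rewrite eq_le; apply/andP; split.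
- apply: lime_le; first exact: is_cvg_nneseries.
  apply: nearW => M /=.
  apply: (@le_trans _ _ (\sum_(0 <= m < (M * N)%N) f m)).
    by apply: (@lee_sum_nneg_natr _ _ xpredT) => //; exact: leq_pmulr.
  rewrite E; apply: (nneseries_lim_ge (P := xpredT)) => l _ _.
  by rewrite sume_ge0.
- apply: lime_le; first by apply: is_cvg_nneseries => l _ _; rewrite sume_ge0.
  apply: nearW => L /=.
  rewrite -E; exact: nneseries_lim_ge.
Qed.
End regroup.
Lemma ser_EFin (R : realType) (u : nat -> R) (F : nat -> \bar R) (S : R) :
  (forall l, F l = (u l)%:E) -> series u @ \oo --> S ->
  (\sum_(l <oo) F l = S%:E)%E.
Proof.
move=> FE uS.
have -> : (fun n => \sum_(0 <= k < n) F k)%E = EFin \o series u.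
  by apply/funext => n; rewrite /= /series /= -sumEFin; apply: eq_bigr => k _.
rewrite EFin_lim; last by apply/cvg_ex; exists S.
by rewrite (cvg_lim _ uS).
Qed.

Lemma seriesMr (R : realType) (f : nat -> R) (c S : R) : series f @ \oo --> S ->
  series (fun l => f l * c) @ \oo --> S * c.
Proof.
move=> fS.
have -> : series (fun l => f l * c) = (fun n => series f n * c).
  by apply/funext => n; rewrite /series /= mulr_suml.
exact: cvgMr_tmp.
Qed.
Section Disc.
Variable R : realType.
Variable N' : nat.
Local Notation N := N'.+1.

Definition pl (l : nat) : R := 7 / 8 * (8^-1) ^+ l.
Definition wm (m : nat) : R := pl (m %/ N)%N / N%:R.
Lemma pl_ge0 l : 0 <= pl l.
Proof. by rewrite /pl mulr_ge0 // exprn_ge0 // invr_ge0. Qed.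
Lemma wm_ge0 m : 0 <= wm m.
Proof. by rewrite /wm divr_ge0 // pl_ge0. Qed.
Definition wnn m : {nonneg R} := NngNum (wm_ge0 m).
Definition Pf : set nat -> \bar R := mseries (fun m => mscale (wnn m) \d_m) 0.
HB.instance Definition _ := Measure.on Pf.

Lemma Pf_int (f : nat -> \bar R) : (forall m, 0 <= f m)%E ->
  (\int[Pf]_x f x = \sum_(m <oo) (wm m)%:E * f m)%E.
Proof.
move=> f0.
rewrite /Pf ge0_integral_measure_series //.
apply: eq_eseriesr => m _.
rewrite ge0_integral_mscale // integral_dirac // diracT mul1e //.
Qed.

Lemma nneg_term (a h : nat -> R) m : (forall l, 0 <= a l) -> (forall k, 0 <= h k) ->
  (0 <= ((a (m %/ N)%N * h (m %% N)%N)%:E))%E.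
Proof. by move=> a0 h0; rewrite lee_fin mulr_ge0. Qed.

Lemma NN (a h : nat -> R) (S : R) : (forall l, 0 <= a l) -> (forall k, 0 <= h k) ->
  series (fun l => pl l * a l) @ \oo --> S ->
  (\int[Pf]_x ((a (x %/ N)%N * h (x %% N)%N)%:E) =
    (S * (\sum_(k < N) h k / N%:R))%:E)%E.
Proof.
move=> a0 h0 aS.
rewrite Pf_int; last by move=> m; exact: nneg_term.
rewrite (@regroup _ N) //; last by move=> m; apply: mule_ge0; [rewrite lee_fin wm_ge0|exact: nneg_term].
apply: (@ser_EFin _ (fun l => pl l * a l * (\sum_(k < N) h k / N%:R))); last first.
  exact: seriesMr.
move=> l; rewrite mulr_sumr -sumEFin; apply: eq_bigr => k _.
rewrite /wm divnMDl // divn_small // addn0 modnMDl modn_small //.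
by rewrite -EFinM; congr EFin; ring.
Qed.

Lemma geo_pl (c : R) : `|c / 8| < 1 ->
  series (fun l => pl l * c ^+ l) @ \oo --> 7 / 8 * (1 - c / 8)^-1.
Proof.
move=> c1.
have -> : (fun l => pl l * c ^+ l) = geometric (7 / 8) (c / 8).
  by apply/funext => l; rewrite /pl /geometric /= exprMn; ring.
exact: cvg_geometric_series.
Qed.

Lemma pl_one : series (fun l => pl l * 1) @ \oo --> (1 : R).
Proof.
have := @geo_pl 1; rewrite mul1r.
have -> : (fun l => pl l * 1 ^+ l) = (fun l => pl l * 1).
  by apply/funext => l; rewrite expr1n.
have -> : 7 / 8 * (1 - 8^-1)^-1 = 1 :> R.
  by field.
by apply; rewrite ger0_norm ?invr_ge0 // ?invf_lt1 // ?ltr1n.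
Qed.

Lemma Pf_setT : Pf setT = 1%E.
Proof.
have E := @NN (fun _ => 1) (fun _ => 1) 1 (fun _ => ler01) (fun _ => ler01) pl_one.
have -> : Pf setT = (\int[Pf]_x ((fun _ => (1:R)) (x %/ N)%N * (fun _ => (1:R)) (x %% N)%N)%:E)%E.
  rewrite -[LHS]mul1e -(integral_cst Pf) //; apply: eq_integral => x _ /=.
  by rewrite mulr1.
rewrite E; congr EFin; rewrite sumr_const card_ord -mulr_natr; field; by rewrite addrC natr1 pnatr_eq0.
Qed.

HB.instance Definition _ := Measure_isProbability.Build _ _ _ Pf Pf_setT.

Lemma NN_int (a h : nat -> R) (S : R) : (forall l, 0 <= a l) -> (forall k, 0 <= h k) ->
  series (fun l => pl l * a l) @ \oo --> S ->
  Pf.-integrable setT (EFin \o (fun m => a (m %/ N)%N * h (m %% N)%N)).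
Proof.
move=> a0 h0 aS; apply/integrableP; split; first by [].
rewrite (eq_integral (fun x => (a (x %/ N)%N * h (x %% N)%N)%:E)); last first.
  by move=> x _; rewrite /= ger0_norm // mulr_ge0.
by rewrite (@NN a h S a0 h0 aS) ltry.
Qed.

Lemma key (a g : nat -> R) (S : R) : (forall l, 0 <= a l) ->
  series (fun l => pl l * a l) @ \oo --> S ->
  Pf.-integrable setT (EFin \o (fun m => a (m %/ N)%N * g (m %% N)%N)) /\
  (\int[Pf]_x ((a (x %/ N)%N * g (x %% N)%N)%:E) =
    (S * (\sum_(k < N) g k / N%:R))%:E)%E.
Proof.
move=> a0 aS.
pose gp k := Num.max (g k) 0; pose gn k := Num.max (- g k) 0.
have gp0 k : 0 <= gp k by rewrite /gp le_max lexx orbT.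
have gn0 k : 0 <= gn k by rewrite /gn le_max lexx orbT.
have gE k : g k = gp k - gn k.
  rewrite /gp /gn !maxEle.
  by case: (leP (g k) 0) => h1; case: (leP (- g k) 0) => h2; lra.
have fE x : a (x %/ N)%N * g (x %% N)%N =
    a (x %/ N)%N * gp (x %% N)%N - a (x %/ N)%N * gn (x %% N)%N.
  by rewrite gE mulrBr.
have ip := @NN_int a gp S a0 gp0 aS; have in_ := @NN_int a gn S a0 gn0 aS.
split.
  apply: (eq_integrable measurableT _ _ _ (integrableB measurableT ip in_)).
  by move=> x _; rewrite /= fE EFinB.
rewrite (eq_integral (fun x => (a (x %/ N)%N * gp (x %% N)%N)%:E -
   (a (x %/ N)%N * gn (x %% N)%N)%:E)%E); last by move=> x _; rewrite fE EFinB.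
rewrite integralB_EFin // (@NN a gp S a0 gp0 aS) (@NN a gn S a0 gn0 aS) -EFinB -mulrBr -sumrB.
by congr (_ * _)%:E; apply: eq_bigr => k _; rewrite (gE k) mulrBl.
Qed.
End Disc.
Section LA.
Variable R : realType.
Variable n' : nat.
Local Notation n := n'.+1.
Variable y : 'cV[R]_n.

Definition ss (v : 'cV[R]_n) : R := \sum_i v i 0 ^+ 2.
Definition uu : 'cV[R]_n := (Num.sqrt (ss y))^-1 *: y.
Definition e0 : 'cV[R]_n := delta_mx 0 0.
Definition ww : 'cV[R]_n := uu - e0.
Definition sw : R := (ww^T *m ww) 0 0.
Definition QQ : 'M[R]_n := 1%:M - (2 / sw) *: (ww *m ww^T).

Lemma QQ_tr : QQ^T = QQ.
Proof. by rewrite /QQ linearB linearZ /= trmx1 trmx_mul trmxK. Qed.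

Lemma sw_sum : sw = \sum_i ww i 0 ^+ 2.
Proof. by rewrite /sw mxE; apply: eq_bigr => i _; rewrite mxE expr2. Qed.

Lemma QQ_orth : QQ *m QQ = 1%:M.
Proof.
set M := ww *m ww^T; set c := 2 / sw.
have MM : M *m M = sw *: M.
  rewrite /M mulmxA -[ww *m ww^T *m ww]mulmxA (mx11_scalar (ww^T *m ww)).
  by rewrite -/sw mul_mx_scalar -scalemxAl.
have cc : c * c * sw = 2 * c.
  rewrite /c; have [->|s0] := eqVneq sw 0; first by rewrite !mulr0 invr0 !mulr0.
  by field.
rewrite /QQ -/M -/c mulmxBl mul1mx mulmxBr mulmx1 -scalemxAl -scalemxAr MM.
rewrite !scalerA; apply/matrixP => i j; rewrite !mxE.
rewrite cc; set t := \sum_j0 _; rewrite /c; ring.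
Qed.

Lemma ss_ge0 (v : 'cV[R]_n) : 0 <= ss v.
Proof. by apply: sumr_ge0 => i _; rewrite sqr_ge0. Qed.

Lemma ss_uu : ss y != 0 -> ss uu = 1.
Proof.
move=> s0; rewrite /ss /uu.
under eq_bigr do rewrite mxE exprMn.
rewrite -mulr_sumr -/(ss y) exprVn sqr_sqrtr ?ss_ge0 // mulVf //.
Qed.

Lemma QQE i j : QQ i j = (i == j)%:R - 2 / sw * (ww i 0 * ww j 0).
Proof. by rewrite /QQ !mxE big_ord1 !mxE. Qed.

Lemma QQ_col0 i : ss y != 0 -> QQ i 0 = uu i 0.
Proof.
move=> s0.
have wE k : ww k 0 = uu k 0 - (k == 0)%:R by rewrite !mxE eqxx andbT.
rewrite QQE.
have [sw0|sw0] := eqVneq sw 0.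
  have wk0 k : ww k 0 = 0.
    move: sw0; rewrite sw_sum => /eqP; rewrite psumr_eq0; last by move=> *; rewrite sqr_ge0.
    by move=> /allP /(_ k (mem_index_enum _)) /=; rewrite sqrf_eq0 => /eqP.
  have := wE i; rewrite wk0 sw0 => h; rewrite invr0 mulr0 mul0r subr0; lra.
have swE : sw = 2 - 2 * uu 0 0.
  rewrite sw_sum (bigD1 0) //= wE eqxx.
  have := ss_uu s0; rewrite /ss (bigD1 0) //= => h1.
  have -> : \sum_(i0 < n | i0 != 0) ww i0 0 ^+ 2 = \sum_(i0 < n | i0 != 0) uu i0 0 ^+ 2.
    by apply: eq_bigr => k /negbTE k0; rewrite wE k0 subr0.
  move: h1; set t := \sum_(_ < _ | _) _ => h1; lra.
have w00 : ww 0 0 = - sw / 2 by rewrite wE eqxx /= mulr1n swE; field.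
rewrite w00 wE; set d := (_ == _)%:R; field.
exact: sw0.
Qed.

Lemma qformZ (H : 'M[R]_n) (a : R) (v : 'cV[R]_n) :
  qform H (a *: v) = a ^+ 2 * qform H v.
Proof.
rewrite /qform linearZ /= [(a *: v)^T]linearZ /= -!scalemxAl !mxE.
by rewrite mulrA expr2.
Qed.

Lemma qform_uu (H : 'M[R]_n) : ss y != 0 -> qform H uu = (ss y)^-1 * qform H y.
Proof.
move=> s0; by rewrite /uu qformZ exprVn sqr_sqrtr // ss_ge0.
Qed.
End LA.

Arguments ss {R n'} v.
Arguments uu {R n'} y.
Arguments QQ {R n'} y.
Arguments QQ_orth {R n'} y.
Arguments QQ_tr {R n'} y.
Arguments QQ_col0 {R n'} y i.
Arguments ss_ge0 {R n'} v.
Arguments qform_uu {R n'} y H.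
Arguments ss_uu {R n'} y.
Arguments pl {R} l.
Arguments wm {R} N' m.
Arguments key {R N'} a g S.
Arguments Pf_int {R N'} f.
Arguments geo_pl {R} c.

Lemma sum_double (R : realType) (F : nat -> R) m :
  \sum_(d < m.*2) F d = \sum_(d < m) F d + \sum_(d < m) F (m + d)%N.
Proof. by rewrite -addnn big_split_ord. Qed.

Lemma term_le_series (R : realType) (u : nat -> \bar R) m0 :
  (forall m, 0 <= u m)%E -> (u m0 <= \sum_(m <oo) u m)%E.
Proof.
move=> u0; apply: le_trans (nneseries_lim_ge m0.+1 (fun n _ _ => u0 n)).
rewrite big_nat_recr //=; apply: leeDr; exact: sume_ge0.
Qed.

Section Main.
Variable R : realType.
Variables n' k : nat.
Local Notation n := n'.+1.
Variable A : 'M[R]_(k, n).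
Variable H : 'I_k -> 'M[R]_n.
Variable j0 : 'I_k.
Variable v0 : 'cV[R]_n.
Hypothesis hv : qform (H j0) v0 != 0.
Local Notation N' := (n'.*2.+1).
Local Notation Nn := (n'.*2.+2).

Definition Qm : 'M[R]_n := QQ v0.
Definition rr (l : nat) : R := 2 ^+ l.
Definition vd (d : nat) (i : 'I_n) : R :=
  if (d < n)%N then Qm i (inord d) else - Qm i (inord (d - n)).
Definition ev (m : nat) : 'cV[R]_n := \col_i (rr (m %/ Nn)%N * vd (m %% Nn)%N i).

Lemma ss0 : ss v0 != 0.
Proof.
apply: contra hv => /eqP s0.
have -> : v0 = 0.
  apply/matrixP => i j; rewrite (ord1 j) mxE.
  move: s0; rewrite /ss => /eqP; rewrite psumr_eq0; last by move=> *; rewrite sqr_ge0.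
  by move=> /allP /(_ i (mem_index_enum _)) /=; rewrite sqrf_eq0 => /eqP.
by rewrite /qform mulmx0 mxE.
Qed.

Lemma vd_lo (c : 'I_n) i : vd c i = Qm i c.
Proof. by rewrite /vd ltn_ord inord_val. Qed.

Lemma vd_hi (c : 'I_n) i : vd (n + c)%N i = - Qm i c.
Proof. by rewrite /vd ltnNge leq_addr /= addKn inord_val. Qed.

Lemma sum_vd i : \sum_(d < Nn) vd d i = 0.
Proof.
have E := @sum_double R (fun d => vd d i) n; simpl in E; rewrite E.
under eq_bigr do rewrite vd_lo.
under [X in _ + X]eq_bigr do rewrite vd_hi.
by rewrite sumrN subrr.
Qed.

Lemma sum_vd2 i j : \sum_(d < Nn) vd d i * vd d j = 2 * (i == j)%:R.
Proof.
have E := @sum_double R (fun d => vd d i * vd d j) n; simpl in E; rewrite E.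
under eq_bigr do rewrite !vd_lo.
under [X in _ + X]eq_bigr do rewrite !vd_hi mulrNN.
have -> : \sum_(d < n) Qm i d * Qm j d = (i == j)%:R.
  rewrite /Qm; have O := QQ_orth v0; rewrite -{2}(QQ_tr v0) in O.
  move: O; generalize (QQ v0) => Q /matrixP /(_ i j) O; rewrite !mxE in O.
  by rewrite -O; apply: eq_bigr => d _; rewrite mxE.
by set t := (_ == _)%:R; ring.
Qed.

Definition S2 : R := 7 / 8 * (1 - 4 / 8)^-1.
Definition s2 : R := S2 * 2 / Nn%:R.

Lemma rr_ge0 l : 0 <= rr l.
Proof. by rewrite /rr exprn_ge0. Qed.
Lemma rr2_ge0 l : 0 <= rr l * rr l.
Proof. by rewrite mulr_ge0 ?rr_ge0. Qed.

Lemma ser1 : series (fun l => pl l * rr l) @ \oo --> (7 / 8 * (1 - 2 / 8)^-1 : R).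
Proof. apply: (geo_pl 2); rewrite ger0_norm; lra. Qed.

Lemma ser2 : series (fun l => pl l * (rr l * rr l)) @ \oo --> S2.
Proof.
have -> : (fun l => pl l * (rr l * rr l)) = (fun l => pl l * 4 ^+ l).
  apply/funext => l; rewrite /rr -exprMn; congr (_ * _ ^+ _); ring.
apply: (geo_pl 4); rewrite ger0_norm; lra.
Qed.

Lemma s2_gt0 : 0 < s2.
Proof.
rewrite /s2 /S2; apply: divr_gt0; last by rewrite ltr0n.
have -> : (7 / 8 * (1 - 4 / 8)^-1 : R) = 7 / 4 by field.
lra.
Qed.

Lemma wn : white_noise (Pf R N') ev s2.
Proof.
split; first by move=> i.
have K1 i := @key R N' rr (fun d => vd d i) _ rr_ge0 ser1.
have K2 i j := @key R N' (fun l => rr l * rr l) (fun d => vd d i * vd d j) _ rr2_ge0 ser2.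
split.
  move=> i; have [I _] := K1 i.
  by apply: (eq_integrable measurableT _ _ _ I) => t _; rewrite /= mxE.
split.
  move=> i; have [_ E] := K1 i.
  rewrite (eq_integral (fun t => (rr (t %/ Nn)%N * vd (t %% Nn)%N i)%:E)); last first.
    by move=> t _; rewrite mxE.
  by rewrite E -mulr_suml sum_vd mul0r mulr0.
move=> i j; have [I E] := K2 i j.
have fe t : ev t i ord0 * ev t j ord0 =
    (rr (t %/ Nn)%N * rr (t %/ Nn)%N) * (vd (t %% Nn)%N i * vd (t %% Nn)%N j).
  by rewrite !mxE; ring.
split.
  by apply: (eq_integrable measurableT _ _ _ I) => t _; rewrite /= fe.
rewrite (eq_integral (fun t => ((rr (t %/ Nn)%N * rr (t %/ Nn)%N) *
   (vd (t %% Nn)%N i * vd (t %% Nn)%N j))%:E)); last by move=> t _; rewrite fe.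
rewrite E -mulr_suml sum_vd2 /s2; case: eqP => _ /=; congr EFin.
  by rewrite mulr1 mulrA.
by rewrite mulr0 mul0r mulr0.
Qed.

Definition alpha : R := (A *m uu v0) j0 0.
Definition gam : R := qform (H j0) (uu v0).

Lemma gam_neq0 : gam != 0.
Proof. by rewrite /gam (qform_uu v0 (H j0) ss0) mulf_neq0 // invr_neq0 // ss0. Qed.

Lemma vd0 i : vd 0 i = uu v0 i 0.
Proof. by rewrite /vd /= (inord_val (ord0 : 'I_n)) (QQ_col0 v0 i ss0). Qed.

Lemma vdn i : vd n i = - uu v0 i 0.
Proof. by rewrite /vd ltnn subnn (inord_val (ord0 : 'I_n)) (QQ_col0 v0 i ss0). Qed.

Lemma choose : exists k0 (sg : R), (k0 < Nn)%N /\ sg ^+ 2 = 1 /\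
  0 <= sg * alpha * gam /\ forall i, vd k0 i = sg * uu v0 i 0.
Proof.
case: (lerP 0 (alpha * gam)) => h.
  exists 0%N, 1; split=> //; split; first by rewrite expr1n.
  by split; [rewrite mul1r|move=> i; rewrite vd0 mul1r].
exists n, (-1); split; first by rewrite !ltnS -addnn leq_addr.
split; first by rewrite sqrrN expr1n.
split; first by rewrite mulN1r mulNr oppr_ge0 ltW.
by move=> i; rewrite vdn mulN1r.
Qed.

Lemma ev_at l k0 (sg : R) : (k0 < Nn)%N -> (forall i, vd k0 i = sg * uu v0 i 0) ->
  ev (l * Nn + k0)%N = (sg * rr l) *: uu v0.
Proof.
move=> hk; move: (uu v0) => u hu; apply/matrixP => i j; rewrite (ord1 j) !mxE.
rewrite divnMDl // divn_small // addn0 modnMDl modn_small // hu; ring.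
Qed.

Lemma betahat_j (y : 'cV[R]_n) : betahat A H y j0 0 = (A *m y) j0 0 + qform (H j0) y.
Proof. by rewrite /betahat !mxE. Qed.

Lemma diverge : (\int[Pf R N']_t (sqnorm (betahat A H (ev t)))%:E < +oo)%E -> False.
Proof.
move=> fin.
have [k0 [sg [hk [hs2 [hpos hvd]]]]] := choose.
set F := fun t => sqnorm (betahat A H (ev t)).
have F0 t : 0 <= F t by apply: sumr_ge0 => i _; exact: sqr_ge0.
have lb l : pl l / Nn%:R * (rr l ^+ 4 * gam ^+ 2) <=
    fine (\int[Pf R N']_t (F t)%:E).
  set m0 := (l * Nn + k0)%N.
  have Fm0 : rr l ^+ 4 * gam ^+ 2 <= F m0.
    apply: (@le_trans _ _ (betahat A H (ev m0) j0 0 ^+ 2)); last first.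
      rewrite /F /sqnorm (bigD1 j0) //= lerDl.
      by apply: sumr_ge0 => i _; exact: sqr_ge0.
    rewrite betahat_j /m0 (@ev_at l k0 sg hk hvd) -scalemxAr mxE (@qformZ R n').
    rewrite -/alpha -/gam.
    set X := sg * rr l * alpha; set Y := (sg * rr l) ^+ 2 * gam.
    have XY : 0 <= X * Y.
      have -> : X * Y = rr l ^+ 3 * (sg * alpha * gam) * sg ^+ 2 by rewrite /X /Y; ring.
      by rewrite hs2 mulr1 mulr_ge0 // exprn_ge0 // rr_ge0.
    have -> : rr l ^+ 4 * gam ^+ 2 = Y ^+ 2.
      rewrite (_ : Y ^+ 2 = (sg ^+ 2) ^+ 2 * (rr l ^+ 4 * gam ^+ 2)).
        by rewrite hs2 expr1n mul1r.
      by rewrite /Y; ring.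
    nra.
  have st : ((wm N' m0 * F m0)%:E <= \int[Pf R N']_t (F t)%:E)%E.
    rewrite (Pf_int (fun t => (F t)%:E)); last by move=> t; rewrite lee_fin.
    rewrite EFinM; apply: (@term_le_series R (fun m => (wm N' m)%:E * (F m)%:E)%E m0).
    by move=> m; rewrite -EFinM lee_fin mulr_ge0 // wm_ge0.
  have hI : (\int[Pf R N']_t (F t)%:E)%E \is a fin_num.
    rewrite ge0_fin_numE //; apply: integral_ge0 => t _; by rewrite lee_fin.
  rewrite -lee_fin fineK //; apply: le_trans st; rewrite lee_fin.
  have -> : wm N' m0 = pl l / Nn%:R by rewrite /wm /m0 divnMDl // divn_small // addn0.
  by apply: ler_wpM2l => //; rewrite divr_ge0 // pl_ge0.
set x := fine _ in lb.
set c : R := 7 / 8 * gam ^+ 2 / Nn%:R.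
have c0 : 0 < c.
  rewrite /c; apply: divr_gt0; last by rewrite ltr0n.
  apply: mulr_gt0; first by apply: divr_gt0; rewrite ltr0n.
  by rewrite lt0r sqr_ge0 andbT sqrf_eq0 gam_neq0.
have key2 l : pl l / Nn%:R * (rr l ^+ 4 * gam ^+ 2) = c * 2 ^+ l.
  have e1 : (2 ^+ l : R) ^+ 4 = 16 ^+ l.
    by rewrite -exprM mulnC exprM; congr (_ ^+ _); ring.
  have e2 : (8^-1 : R) ^+ l * 16 ^+ l = 2 ^+ l.
    by rewrite -exprMn; congr (_ ^+ _); field.
  rewrite /pl /rr e1.
  rewrite (_ : 7 / 8 * 8^-1 ^+ l / Nn%:R * (16 ^+ l * gam ^+ 2) =
     7 / 8 * (8^-1 ^+ l * 16 ^+ l) * gam ^+ 2 / Nn%:R); last by ring.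
  by rewrite e2 /c; ring.
set l := (Num.Def.truncn (x / c)).+1.
have h2 : (l%:R : R) <= 2 ^+ l by rewrite -natrX ler_nat ltnW // ltn_expl.
have h4 : x < 2 ^+ l * c.
  by rewrite -ltr_pdivrMr //; apply: lt_le_trans (truncnS_gt _) h2.
have := lb l; rewrite key2 => hl.
rewrite mulrC in h4; by have := lt_le_trans h4 hl; rewrite ltxx.
Qed.
End Main.

Theorem propositionB1 (R : realType) (n k : nat) (X : 'M[R]_(n, k))
  (A : 'M[R]_(k, n)) (H : 'I_k -> 'M[R]_n) :
  (0 < k)%N -> (k < n)%N -> \rank X = k ->
  A *m X = 1%:M ->
  (forall j, \tr (H j) = 0) ->
  (forall j, X^T *m H j *m X = 0) ->
  (forall (d : measure_display) (T : measurableType d) (P : probability T R)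
          (e : T -> 'cV[R]_n) (s2 : R) (beta : 'cV[R]_k),
      0 < s2 -> white_noise P e s2 ->
      (\int[P]_t (sqnorm (betahat A H (X *m beta + e t)))%:E < +oo)%E) ->
  exists B : 'M[R]_(k, n), forall y : 'cV[R]_n, betahat A H y = B *m y.
Proof.
move: X A H; case: n => [|n'] X A H k0 kn rk AX trH XHX hyp.
  by rewrite ltn0 in kn.
exists A => y.
have qz : forall j (v : 'cV[R]_n'.+1), qform (H j) v = 0.
  move=> j v; apply/eqP; apply/negPn/negP => hv.
  apply: (@diverge R n' k A H j v hv).
  have := hyp _ nat (Pf R (n'.*2.+1)) (@ev R n' v) (@s2 R n') 0 (@s2_gt0 R n') (@wn R n' v).
  by under eq_integral => t _ do rewrite mulmx0 add0r.
rewrite /betahat (_ : \col_(j < k) qform (H j) y = 0) ?addr0 //.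
by apply/matrixP => i j; rewrite !mxE qz.
Qed.
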